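(* Let $m\ge 1$, $\bar l=(l_0,\dots,l_m)\in\mathbb{Z}_{\ge1}^{m+1}$, $L=l_0+\dots+l_m$, let $\alpha_1,\dots,\alpha_m$ be indeterminates and $\alpha_0=0$. For $j=0,1,\dots,m$ define \[ A_{\bar l,j}(t,\bar\alpha)=\sum_{i=l_j}^{L}t^{L-i}\,i!\,\sigma_i\big(\bar l,(\alpha_0-\alpha_j,\alpha_1-\alpha_j,\dots,\alpha_m-\alpha_j)\big). \] Then $\frac{1}{l_j!}A_{\bar l,j}(t,\bar\alpha)\in\mathbb{Z}[t,\alpha_1,\dots,\alpha_m]$ for all $j=0,1,\dots,m$.
   Context: For $\bar\beta=(\beta_0,\dots,\beta_m)$ the coefficients $\sigma_i(\bar l,\bar\beta)$ are defined by $\prod_{h=0}^m(\beta_h-w)^{l_h}=\sum_{i=0}^L\sigma_i(\bar l,\bar\beta)w^i$. (For $\bar\beta$ whose $j$-th coordinate is $0$, $\sigma_i=0$ for $i<l_j$.) For $j\ge1$, $A_{\bar l,j}$ is the polynomial satisfying $e^{\alpha_jt}A_{\bar l,0}(t)-A_{\bar l,j}(t)=O(t^{L+1})$ with $\deg_t A_{\bar l,j}\le L-l_j$. *)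

(* Defs.v *)
From mathcomp Require Import all_boot all_algebra.
From mathcomp Require Import mpoly.
Set Implicit Arguments. Unset Strict Implicit. Unset Printing Implicit Defensive.
Import GRing.Theory.
Local Open Scope ring_scope.

(* Polynomial ring Q[t, alpha_1, ..., alpha_m] as {mpoly rat[m.+1]}:
   variable 'X_0 is t, variable 'X_h (1 <= h <= m) is alpha_h. *)

Definition alpha (m : nat) (h : 'I_m.+1) : {mpoly rat[m.+1]} :=
  if h == ord0 then 0 else 'X_h.

Definition tvar (m : nat) : {mpoly rat[m.+1]} := 'X_ord0.

Definition sigma (m : nat) (l : 'I_m.+1 -> nat)
  (beta : 'I_m.+1 -> {mpoly rat[m.+1]}) (i : nat) : {mpoly rat[m.+1]} :=
  (\prod_(h < m.+1) ((beta h)%:P - 'X) ^+ l h)`_i.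

Definition Lsum (m : nat) (l : 'I_m.+1 -> nat) : nat := (\sum_(h < m.+1) l h)%N.

Definition Apoly (m : nat) (l : 'I_m.+1 -> nat) (j : 'I_m.+1) : {mpoly rat[m.+1]} :=
  \sum_(l j <= i < (Lsum l).+1)
     tvar m ^+ (Lsum l - i) * (i`!)%:R * sigma l (fun h => alpha h - alpha j) i.

(* Main.v *)
Require Import Defs.
From mathcomp Require Import all_boot all_algebra.
From mathcomp Require Import mpoly.
Import GRing.Theory.
Local Open Scope ring_scope.

Theorem lemma4p3 (m : nat) (hm : (1 <= m)%N) (l : 'I_m.+1 -> nat)
  (hl : forall h, (1 <= l h)%N) (j : 'I_m.+1) :
  exists P : {mpoly int[m.+1]},
    map_mpoly (fun z : int => z%:~R : rat) P = ((l j)`!%:R)^-1 *: Apoly l j.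
Proof.
pose aZ (h : 'I_m.+1) : {mpoly int[m.+1]} := if h == ord0 then 0 else 'X_h.
have hX : forall i : 'I_m.+1,
  map_mpoly (fun z : int => z%:~R : rat) 'X_i = 'X_i.
  by move=> i; rewrite /mpolyX map_mpolyX.
have ha : forall h, map_mpoly (fun z : int => z%:~R : rat) (aZ h) = alpha h.
  by move=> h; rewrite /aZ /alpha; case: (h == ord0); rewrite ?rmorph0 ?hX.
pose sZ i := (\prod_(h < m.+1) ((aZ h - aZ j)%:P - 'X) ^+ l h)`_i.
have hs : forall i, map_mpoly (fun z : int => z%:~R : rat) (sZ i)
    = sigma l (fun h => alpha h - alpha j) i.
  move=> i; rewrite /sZ /sigma -coef_map rmorph_prod; congr (_ `_ i).
  rewrite (eq_bigr (fun h => ((alpha h - alpha j)%:P - 'X) ^+ l h)) // => h _.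
  rewrite rmorphXn rmorphB /= map_polyC map_polyX /= -!ha -rmorphB; reflexivity.
pose tZ : {mpoly int[m.+1]} := 'X_ord0.
exists (\sum_(l j <= i < (Lsum l).+1)
  tZ ^+ (Lsum l - i) * (('C(i, l j) * (i - l j)`!)%N%:R) * sZ i).
rewrite rmorph_sum /Apoly scaler_sumr; apply: eq_big_nat => i /andP[hi _].
rewrite 2!rmorphM rmorphXn rmorph_nat /tvar -hs -hX.
rewrite scalerAl scalerAr; congr (_ * _ * _); try reflexivity.
have E : forall n, (n%:R : {mpoly rat[m.+1]}) = (n%:R : rat) *: 1.
  by move=> n; rewrite scaler_nat.
rewrite (E (_ * _)%N) (E (i`!)) scalerA -(bin_fact hi); congr (_ *: 1).
rewrite !natrM mulrCA mulKf //.
by rewrite Num.Theory.pnatr_eq0 -lt0n fact_gt0.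
Qed.
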